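(* Let $X$ be a real random variable and $U$ a continuously distributed random variable with $U\sim\mathrm{Unif}[0,1]$. Let $\mathcal{T}=[a,b]\subseteq[0,1]$. If $U$ is $\mathcal{T}$-independent of $X$, then $F_{X\mid U}(x\mid u)=F_X(x)$ for all $x\in\mathbb{R}$ and almost all $u\in\mathcal{T}$.
   Context: $U$ is $\mathcal{T}$-independent of $X$ if $F_{U\mid X}(\tau\mid x)=F_U(\tau)$ for all $x\in\operatorname{supp}(X)$ and all $\tau\in\mathcal{T}$. Here $F_{X\mid U}(\cdot\mid u)$ is the conditional cdf of $X$ given $U=u$ and $F_X$ is the marginal cdf of $X$. *)

(* Defs.v *)
From HB Require Import structures.
From mathcomp Require Import all_boot all_order all_algebra.
From mathcomp Require Import all_classical all_reals all_analysis.
Set Implicit Arguments. Unset Strict Implicit. Unset Printing Implicit Defensive.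
Import Order.TTheory GRing.Theory Num.Theory.
Import numFieldNormedType.Exports.
Local Open Scope classical_set_scope.
Local Open Scope ring_scope.

(* [is_cond_cdf P Y Z G] : G y z is (a version of) the conditional cdf
   F_{Y|Z}(y|z) of Y given Z = z, i.e. for every y, z |-> G y z is measurable and
   for every Borel set B,
     P(Y <= y, Z \in B) = \int_B G y z  dP_Z(z). *)
Definition is_cond_cdf d (T : measurableType d) (R : realType)
  (P : probability T R) (Y Z : {RV P >-> R}) (G : R -> R -> R) : Prop :=
  forall y : R, measurable_fun setT (G y) /\
    forall B : set R, measurable B ->
      P (Y @^-1` `]-oo, y] `&` Z @^-1` B) =
      (\int[distribution P Z]_(z in B) (G y z)%:E)%E.

Definition rv_support d (T : measurableType d) (R : realType)
  (P : probability T R) (X : {RV P >-> R}) : set R :=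
  [set x | forall e : R, 0 < e -> (0 < distribution P X (ball x e))%E].

Definition is_unif01 d (T : measurableType d) (R : realType)
  (P : probability T R) (U : {RV P >-> R}) : Prop :=
  forall t : R, cdf U t = (Num.min (Num.max t 0) 1)%:E.

Definition T_independent d (T : measurableType d) (R : realType)
  (P : probability T R) (U X : {RV P >-> R}) (H : R -> R -> R) (a b : R) : Prop :=
  forall x tau, x \in rv_support X -> tau \in `[a, b] ->
    (H tau x)%:E = cdf U tau.

(* Main.v *)
Require Import Defs.
From HB Require Import structures.
From mathcomp Require Import all_boot all_order all_algebra.
From mathcomp Require Import all_classical all_reals all_analysis.
Import Order.TTheory GRing.Theory Num.Theory.
Import numFieldNormedType.Exports.
Local Open Scope classical_set_scope.
Local Open Scope ring_scope.
From mathcomp Require Import lra ring.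
Lemma itvI (R : realType) (s t a b : R) :
  `]s, t]%classic `&` `]a, b]%classic = `]Num.max s a, Num.min t b]%classic.
Proof.
apply/seteqP; split => z /=; rewrite !in_itv /=.
  by move=> [/andP[sz zt] /andP[az zb]]; rewrite gt_max le_min sz zt az zb.
by rewrite gt_max le_min => /andP[/andP[-> ->] /andP[-> ->]].
Qed.
Lemma unique_ab (R : realType) (m1 m2 : {measure set R -> \bar R}) (a b : R) :
  (m1 `]a, b]%classic < +oo)%E ->
  (forall s t, a <= s -> s < t -> t <= b -> m1 `]s, t]%classic = m2 `]s, t]%classic) ->
  forall E, measurable E -> m1 (E `&` `]a, b]%classic) = m2 (E `&` `]a, b]%classic).
Proof.
move=> m1oo h E mE.
have mab : measurable (`]a, b]%classic : set R) by [].
pose n1 := mrestr m1 mab. pose n2 := mrestr m2 mab.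
apply: (@measure_unique _ _ _ (@ocitv R) (fun k => `]- k%:R, k%:R]%classic) _ _ _ _ n1 n2 _ _ E mE) => //.
- exact: ocitvI.
- move=> k; exact: is_ocitv.
- apply/seteqP; split => // z _.
  exists (Num.trunc `|z|).+1 => //=; rewrite in_itv /=.
  have h1 := truncnS_gt `|z|.
  apply/andP; split.
    rewrite ltrNl; apply: le_lt_trans h1; rewrite -normrN; exact: ler_norm.
  apply: ltW; apply: le_lt_trans h1; exact: ler_norm.
- move=> A /ocitvP [->|[[s t] /= st ->]]; first by rewrite !measure0.
  rewrite /n1 /n2 /mrestr itvI.
  have [lt|ge] := ltP (Num.max s a) (Num.min t b).
    apply: h => //; first by rewrite le_max lexx orbT.
    by rewrite ge_min lexx orbT.
  have -> : `]Num.max s a, Num.min t b]%classic = set0 :> set R.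
    apply/seteqP; split => // z /=; rewrite in_itv /= => /andP[h1 h2].
    by have := lt_le_trans h1 h2; rewrite ltNge ge.
  by rewrite !measure0.
- move=> k; rewrite /n1 /mrestr; apply: le_lt_trans m1oo.
  apply: le_measure; rewrite ?inE //; exact: measurableI.
Qed.
Lemma supp_null (R : realType) (mu : {measure set R -> \bar R}) :
  mu.-negligible (~` [set x | forall e : R, 0 < e -> (0 < mu (ball x e))%E]).
Proof.
pose B (p : nat * int) : set R :=
  let q : R := p.2%:~R / p.1.+1%:R in let r : R := 2 / p.1.+1%:R in
  if mu (ball q r) == 0%E then ball q r else set0.
pose F k := match (unpickle k : option (nat * int)) with Some p => B p | None => set0 end.
apply: (negligibleS _ (negligible_bigcup (F := F) _)).
- move=> z /= /existsNP [e /not_implyP [e0 he]].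
  have mz : mu (ball z e) = 0%E.
    apply/eqP; rewrite eq_le measure_ge0 andbT; rewrite leNgt; exact/negP.
  pose n := Num.trunc (3 / e).
  pose m := Num.floor (z * n.+1%:R).
  exists (pickle (n, m)) => //.
  rewrite /F pickleK /B /=.
  set N := n.+1%:R : R.
  have N0 : 0 < N by rewrite ltr0n.
  pose w := N^-1.
  have Nw : N * w = 1 by rewrite mulfV // gt_eqF.
  have w0 : 0 < w by rewrite invr_gt0.
  have h3 : 3 / e < N := truncnS_gt _.
  have h3' : 3 * w < e.
    rewrite ltr_pdivrMr // in h3.
    have : 3 * w < N * e * w by rewrite ltr_pM2r.
    by rewrite mulrAC Nw mul1r.
  have hm1 : m%:~R <= z * N := floor_le _.
  have hm2 : z * N < m%:~R + 1 by rewrite -[1]/(1%:~R) -intrD; exact: floorD1_gt.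
  have hq1 : m%:~R * w <= z.
    have : m%:~R * w <= z * N * w by rewrite ler_pM2r.
    by rewrite -mulrA Nw mulr1.
  have hq2 : z < m%:~R * w + w.
    have : z * N * w < (m%:~R + 1) * w by rewrite ltr_pM2r.
    by rewrite -mulrA Nw mulr1 mulrDl mul1r.
  have sub : ball (m%:~R / N) (2 / N) `<=` ball z e.
    rewrite !ball_itv => y /=; rewrite !in_itv /= => /andP[y1 y2].
    apply/andP; split; rewrite -/w in y1 y2 *; lra.
  have -> : mu (ball (m%:~R / N) (2 / N)) = 0%E.
    apply/eqP; rewrite eq_le measure_ge0 andbT -mz.
    by apply: le_measure => //; rewrite inE; rewrite ball_itv; exact: measurable_itv.
  rewrite eqxx ball_itv /= in_itv /= -/w; apply/andP; split; lra.
- move=> k; rewrite /F; case: (unpickle k) => [p|]; last exact: negligible_set0.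
  rewrite /B; case: ifPn => [/eqP h|_]; last exact: negligible_set0.
  by eexists; split; [|exact: h|]; rewrite // ball_itv; exact: measurable_itv.
Qed.

Lemma itv_split (R : realType) (s t : R) : s <= t ->
  `]-oo, t]%classic = `]-oo, s]%classic `|` `]s, t]%classic :> set R.
Proof.
move=> st; apply/seteqP; split => z /=; rewrite !in_itv /=.
  by move=> zt; have [zs|sz] := leP z s; [left|right; apply/andP].
by case=> [zs|/andP[_ ->//]]; apply: le_trans zs st.
Qed.

Lemma meas_oc (R : realType) (m : {measure set R -> \bar R}) (s t p q : R) :
  s <= t -> m `]-oo, t]%classic = p%:E -> m `]-oo, s]%classic = q%:E ->
  m `]s, t]%classic = (p - q)%:E.
Proof.
move=> st hp hq.
have : m `]-oo, t]%classic = (m `]-oo, s]%classic + m `]s, t]%classic)%E.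
  rewrite (@itv_split R s t st) measureU //.
  apply/seteqP; split => // z /=; rewrite !in_itv /= => -[zs /andP[sz _]].
  by have := le_lt_trans zs sz; rewrite ltxx.
rewrite hp hq; case: (m `]s, t]%classic) => [r||] //= [->].
by rewrite addrC addrK.
Qed.

Definition lam (R : realType) : set R -> \bar R := @lebesgue_measure R.
Section LamSec.
Variable R : realType.
Let lam0 : lam R set0 = 0%E. Proof. exact: (@measure0 _ _ _ (@lebesgue_measure R)). Qed.
Let lam_ge0 A : (0 <= lam R A)%E. Proof. exact: (@measure_ge0 _ _ _ (@lebesgue_measure R)). Qed.
Let lam_sa : semi_sigma_additive (lam R).
Proof. exact: (@measure_semi_sigma_additive _ _ _ (@lebesgue_measure R)). Qed.
HB.instance Definition _ := isMeasure.Build _ _ _ (lam R) lam0 lam_ge0 lam_sa.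
End LamSec.

Theorem corollary8 (d : measure_display) (T : measurableType d) (R : realType)
  (P : probability T R) (X U : {RV P >-> R}) (a b : R)
  (H G : R -> R -> R) :
  0 <= a -> a <= b -> b <= 1 ->
  is_unif01 U ->
  is_cond_cdf U X H ->
  T_independent U X H a b ->
  is_cond_cdf X U G ->
  forall x : R,
    {ae (@lebesgue_measure R), forall u : R, u \in `[a, b] -> (G x u)%:E = cdf X x}.
Proof.
move=> a0 ab b1 hU hH hT hG x.
set PU := distribution P U.
set PX := distribution P X.
have mA : measurable (X @^-1` `]-oo, x]%classic) by exact: measurable_funPTI.
set A := X @^-1` `]-oo, x]%classic in mA.
pose mX : {measure set R -> \bar R} :=
  @measure_function_pushforward__canonical__measure_function_Measure _ _ _ _ _
    (mrestr P mA) U (measurable_funP U).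
have mXE E : mX E = P (U @^-1` E `&` A) by [].
pose c := fine (cdf X x).
have cE : cdf X x = c%:E.
  by rewrite /c fineK // /cdf fin_num_measure.
have c0 : 0 <= c by rewrite /c fine_ge0 // cdf_ge0.
have hUt t : 0 <= t -> t <= 1 -> PU `]-oo, t]%classic = t%:E.
  by move=> t0 t1; have := hU t; rewrite /cdf max_l // min_l.
have hXt t : a <= t -> t <= b -> mX `]-oo, t]%classic = (t * c)%:E.
  move=> hat tb; rewrite mXE (hH t).2 //.
  have tab : t \in `[a, b] by rewrite in_itv /= hat tb.
  rewrite (@ae_eq_integral _ _ _ PX _ (fun=> t%:E)) //.
  - by rewrite integral_cst // EFinM -cE.
  - apply/measurable_realfun.measurable_EFinP; apply: measurable_funS (hH t).1 => //.
  - rewrite /ae_eq /prop_near1 /almost_everywhere /=.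
    apply: (negligibleS _ (supp_null R PX)) => z /= hz.
    apply: contra_not hz => hz _.
    rewrite (hT z t) ?inE // -[cdf U t]/(PU `]-oo, t]%classic) hUt //.
      exact: le_trans hat.
    exact: le_trans b1.
have L1 E : measurable E -> mX (E `&` `]a, b]%classic) =
    mscale (NngNum c0) PU (E `&` `]a, b]%classic).
  apply: unique_ab.
  - apply: le_lt_trans (probability_le1 P _) _; last by rewrite ltey.
    apply: measurableI => //; exact: measurable_funPTI.
  - move=> s t hs st tb.
    have sb : s <= b by apply: ltW; apply: lt_le_trans tb.
    have ta : a <= t by apply: le_trans hs (ltW st).
    rewrite (@meas_oc R mX s t _ _ (ltW st) (hXt t ta tb) (hXt s hs sb)).
    transitivity (c%:E * PU `]s, t]%classic)%E; last by [].
    have s0 : 0 <= s by apply: le_trans hs.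
    have t0 : 0 <= t by apply: le_trans s0 (ltW st).
    have s1 : s <= 1 by apply: le_trans b1.
    have t1 : t <= 1 by apply: le_trans b1.
    have e : PU `]s, t]%classic = (t - s)%:E.
      exact: (@meas_oc R PU s t _ _ (ltW st) (hUt t t0 t1) (hUt s s0 s1)).
    by rewrite e -EFinM; congr EFin; ring.
have mab : measurable (`]a, b]%classic : set R) by [].
have L2 E : measurable E -> PU (E `&` `]a, b]%classic) =
    lam R (E `&` `]a, b]%classic).
  move=> mE; apply: (@unique_ab R PU (lam R) a b) => //.
  - apply: le_lt_trans (probability_le1 _ mab) _; by rewrite ltey.
  - move=> s t hs st tb.
    have s0 : 0 <= s by apply: le_trans hs.
    have t0 : 0 <= t by apply: le_trans s0 (ltW st).
    have s1 : s <= 1 by apply: le_trans (ltW (lt_le_trans st tb)) b1.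
    have t1 : t <= 1 by apply: le_trans b1.
    have e : PU `]s, t]%classic = (t - s)%:E.
      exact: (@meas_oc R PU s t _ _ (ltW st) (hUt t t0 t1) (hUt s s0 s1)).
    transitivity ((t - s)%:E); first exact: e.
    have h := @lebesgue_measure_itv R `]s, t].
    move: h; rewrite /= lte_fin st => h.
    rewrite EFinB; exact: (esym h).
have hGi : PU.-integrable `]a, b]%classic (EFin \o cst c).
  exact: finite_measure_integrable_cst.
have hae : ae_eq PU `]a, b]%classic (EFin \o cst c) (EFin \o G x).
  apply: integral_ae_eq => //.
    apply/measurable_realfun.measurable_EFinP; apply: measurable_funS (hG x).1 => //.
  move=> E ED mE.
  have h := (hG x).2 E mE.
  have h1 := L1 E mE.
  rewrite setIidl // mXE in h1.
  transitivity (c%:E * PU E)%E.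
    exact: (integral_cst PU mE c%:E).
  transitivity (P (X @^-1` `]-oo, x]%classic `&` U @^-1` E)); last exact: h.
  rewrite setIC; exact: (esym h1).
have [N [mN N0 sN]] : PU.-negligible
    (~` [set u | `]a, b]%classic u -> (EFin \o cst c) u = (EFin \o G x) u]).
  exact: hae.
have mN' : @measurable _ (measurableTypeR R) N by exact: mN.
suff hn : (@lebesgue_measure R).-negligible
    (~` [set u | u \in `[a, b] -> (G x u)%:E = cdf X x]) by exact: hn.
exists ((N `&` `]a, b]%classic) `|` [set a]); split.
- apply: measurableU; first by apply: measurableI => //.
  exact: measurable_set1.
- rewrite measureU //; last 2 first.
  + exact: measurableI.
  + apply/seteqP; split => // z /= [[_]]; rewrite in_itv /= => /andP[az _] za.
    by move: az; rewrite za ltxx.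
  transitivity (lam R (N `&` `]a, b]%classic) + 0)%E.
    by congr (_ + _)%E; exact: lebesgue_measure_set1.
  rewrite adde0 -(L2 N mN).
  apply/eqP; rewrite eq_le measure_ge0 andbT -N0.
  apply: le_measure; rewrite ?inE //; exact: measurableI.
- move=> z /= /not_implyP [zab hne].
  have [->|za] := eqVneq z a; first by right.
  have Dz : `]a, b]%classic z.
    move: zab; rewrite /= !in_itv /= => /andP[az ->]; rewrite andbT.
    by rewrite lt_neqAle az eq_sym za.
  left; split => //.
  apply: sN => /= /(_ Dz) h; apply: hne; rewrite cE; exact: (esym h).
Qed.
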